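(* For all $N\ge1$ and $1\le k\le N$, $\left(\tfrac kN\right)^r e^{-r^2/k}\le E[X_{k,N}]\le \left(\tfrac kN\right)^r e^{r/k}$.
   Context: Fix $r\in(0,1)$. Multitype Yule process: at time $0$ a single individual of type $1$ is born; no deaths; each individual independently gives birth at rate $1$; a newborn has, independently, its parent's type with probability $1-r$ and otherwise a brand-new type. Individuals are numbered in order of birth; if the $k$-th individual born has a type different from its parent, that type is called type $k$. $T_N$ is the time the population reaches size $N$; $X_{k,N}$ is the fraction of individuals at time $T_N$ with type in $\{1,\dots,k\}$. *)

(* Defs.v *)
From HB Require Import structures.
From mathcomp Require Import all_boot all_order all_algebra.
From mathcomp Require Import all_classical all_reals all_analysis.
Set Implicit Arguments. Unset Strict Implicit. Unset Printing Implicit Defensive.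
Import Order.TTheory GRing.Theory Num.Theory.
Local Open Scope ring_scope.

(* Embedded jump chain of the multitype Yule process.
   A state is the sequence s of types of individuals 1, ..., size s
   (in order of birth).  At each birth, by the memoryless property of the
   independent rate-1 clocks, the parent is uniform among the size s current
   individuals; the newborn (individual number size s + 1) inherits the parent's
   type with probability 1 - r, and otherwise gets the brand-new type size s + 1. *)
Fixpoint yule_exp (R : realType) (r : R) (n : nat) (f : seq nat -> R)
    (s : seq nat) : R :=
  match n with
  | 0 => f s
  | n'.+1 =>
      \sum_(i < size s)
        (size s)%:R^-1 *
          ((1 - r) * yule_exp r n' f (rcons s (nth 0%N s i))
           + r * yule_exp r n' f (rcons s (size s).+1))
  end.

Definition frac_types_le (R : realType) (N k : nat) (s : seq nat) : R :=
  (count (fun t => (t <= k)%N) s)%:R / N%:R.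

(* E[X_{k,N}]: at time T_N the population has size N, i.e. N - 1 births have
   occurred after the initial individual of type 1. *)
Definition EX (R : realType) (r : R) (k N : nat) : R :=
  yule_exp r (N.-1) (frac_types_le R N k) [:: 1%N].

(* Main.v *)
Require Import Defs.
From HB Require Import structures.
From mathcomp Require Import all_boot all_order all_algebra.
From mathcomp Require Import all_classical all_reals all_analysis.
From mathcomp Require Import ring lra.
Import Order.TTheory GRing.Theory Num.Theory.
Local Open Scope ring_scope.

Section Yule.
Variables (R : realType) (r : R).

Lemma yule_lin n (g h : seq nat -> R) a b s :
  yule_exp r n (fun t => a * g t + b * h t) s =
  a * yule_exp r n g s + b * yule_exp r n h s.
Proof.
elim: n s => [//|n IH] s /=.
rewrite !mulr_sumr -big_split /=; apply: eq_bigr => i _.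
rewrite !IH; ring.
Qed.

Lemma yule_const n a s : (0 < size s)%N -> yule_exp r n (fun _ => a) s = a.
Proof.
elim: n s => [//|n IH] s s0 /=.
under eq_bigr do rewrite !IH ?size_rcons //.
rewrite sumr_const card_ord -mulrnAl.
have -> : (size s)%:R^-1 *+ size s = 1 :> R.
  by rewrite -(mulr_natr ((size s)%:R^-1)) mulVf // pnatr_eq0 -lt0n.
rewrite mul1r.
ring.
Qed.

Definition YInv (t : seq nat) := all (fun x => x <= size t)%N t.

Lemma Inv_rcons_nth t i : (i < size t)%N -> YInv t -> YInv (rcons t (nth 0%N t i)).
Proof.
move=> Hi Ht; rewrite /YInv all_rcons size_rcons.
apply/andP; split.
  by apply: leqW; exact: (all_nthP 0%N Ht).
by apply: sub_all Ht => x /leqW.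
Qed.

Lemma Inv_rcons_new t : YInv t -> YInv (rcons t (size t).+1).
Proof.
move=> Ht; rewrite /YInv all_rcons size_rcons leqnn /=.
by apply: sub_all Ht => x /leqW.
Qed.

Lemma yule_congr n (g h : seq nat -> R) s : YInv s ->
  (forall t, YInv t -> size t = (size s + n)%N -> g t = h t) ->
  yule_exp r n g s = yule_exp r n h s.
Proof.
elim: n s => [|n IH] s Hs H /=; first by apply: H; rewrite ?addn0.
apply: eq_bigr => i _; congr (_ * (_ * _ + _ * _)); apply: IH.
- exact: Inv_rcons_nth.
- by move=> t Ht; rewrite size_rcons addSnnS => /H; apply.
- exact: Inv_rcons_new.
- by move=> t Ht; rewrite size_rcons addSnnS => /H; apply.
Qed.

Lemma yule_S n f s : yule_exp r n.+1 f s =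
  \sum_(i < size s)
        (size s)%:R^-1 *
          ((1 - r) * yule_exp r n f (rcons s (nth 0%N s i))
           + r * yule_exp r n f (rcons s (size s).+1)).
Proof. by []. Qed.

Lemma yule_tower n f s :
  yule_exp r n.+1 f s = yule_exp r n (yule_exp r 1 f) s.
Proof.
elim: n s => [//|n IH] s.
rewrite yule_S. under eq_bigr do rewrite !IH. by [].
Qed.

Lemma count_sumR (p : pred nat) (s : seq nat) :
  (count p s)%:R = \sum_(i < size s) (p (nth 0%N s i))%:R :> R.
Proof.
elim: s => [|x s IH] /=; first by rewrite big_ord0.
by rewrite big_ord_recl natrD IH.
Qed.


Definition cnt (k : nat) (t : seq nat) : R := (count (fun x => x <= k)%N t)%:R.

Lemma cnt_rcons k t x : cnt k (rcons t x) = cnt k t + (x <= k)%N%:R.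
Proof. by rewrite /cnt -cats1 count_cat /= addn0 natrD. Qed.

Lemma invn_mul (m : nat) : (0 < m)%N -> (m%:R^-1 : R) *+ m = 1.
Proof. by move=> m0; rewrite -(mulr_natr (m%:R^-1)) mulVf // pnatr_eq0 -lt0n. Qed.

Lemma one_step k t : YInv t -> (0 < size t)%N ->
  yule_exp r 1 (cnt k) t =
  if (size t < k)%N then cnt k t + 1
  else cnt k t * (1 + (1 - r) / (size t)%:R).
Proof.
move=> Ht t0; rewrite yule_S /=.
case: ifP => Hk.
  under eq_bigr => i _.
    rewrite !cnt_rcons.
    have -> : (nth 0%N t i <= k)%N.
      by apply: leq_trans (ltnW Hk); exact: (all_nthP 0%N Ht).
    rewrite Hk.
    over.
  rewrite sumr_const card_ord -mulrnAl invn_mul // mul1r /=; ring.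
under eq_bigr => i _.
  rewrite !cnt_rcons Hk /= addr0.
  have -> : (size t)%:R^-1 * ((1 - r) * (cnt k t + (nth 0%N t i <= k)%N%:R) + r * cnt k t)
     = (size t)%:R^-1 * cnt k t + ((size t)%:R^-1 * (1 - r)) * (nth 0%N t i <= k)%N%:R.
    by ring.
  over.
rewrite big_split /= sumr_const card_ord -mulrnAl invn_mul // mul1r.
rewrite -mulr_sumr -(count_sumR (fun x => (x <= k)%N)) -/(cnt k t).
field; rewrite pnatr_eq0 -lt0n //.
Qed.

End Yule.

Section Rec.
Variables (R : realType) (r : R) (k : nat).

Definition E n := yule_exp r n (cnt R k) [:: 1%N].

Lemma Inv1 : YInv [:: 1%N]. Proof. by []. Qed.

Lemma E_step n : E n.+1 =
  if (n.+1 < k)%N then E n + 1 else E n * (1 + (1 - r) / (n.+1)%:R).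
Proof.
rewrite /E yule_tower; case: ifP => Hk.
  rewrite (@yule_congr R r n _ (fun t => 1 * cnt R k t + 1 * (fun _ => 1) t)) //.
    by rewrite yule_lin yule_const // !mul1r.
  by move=> t Ht Hs; rewrite one_step // ?Hs // Hk !mul1r.
rewrite (@yule_congr R r n _ (fun t => (1 + (1 - r) / (n.+1)%:R) * cnt R k t + 0 * cnt R k t)) //.
  by rewrite yule_lin mul0r addr0 mulrC.
by move=> t Ht Hs; rewrite one_step // ?Hs // Hk mul0r addr0 mulrC.
Qed.

Lemma E_small n : (1 <= k)%N -> (n < k)%N -> E n = n.+1%:R.
Proof.
move=> k1; elim: n => [|n IH] Hn.
  by rewrite /E /= /cnt /= k1.
by rewrite E_step Hn IH ?(ltnW Hn) // natr1.
Qed.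

Definition Q N := E N.-1 / N%:R.

Lemma Q_k : (1 <= k)%N -> Q k = 1.
Proof.
move=> k1; have hk : (k.-1 < k)%N by rewrite prednK.
rewrite /Q E_small // prednK //.
by rewrite divff // pnatr_eq0 -lt0n.
Qed.

Lemma Q_step N : (k <= N)%N -> (1 <= N)%N -> Q N.+1 = Q N * (1 - r / (N.+1)%:R).
Proof.
move=> kN N1; rewrite /Q /=.
have -> : N = (N.-1).+1 by rewrite prednK.
rewrite E_step prednK // ltnNge kN /=.
have h1 : (N%:R : R) != 0 by rewrite pnatr_eq0 -lt0n.
have h2 : (N.+1%:R : R) != 0 by rewrite pnatr_eq0.
rewrite -natr1 in h2 *; field.
by rewrite h1 h2.
Qed.

Lemma EX_Q N : EX r k N = Q N.
Proof.
rewrite /EX /Q.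
have -> : frac_types_le R N k = (fun t => N%:R^-1 * cnt R k t + 0 * cnt R k t).
  by apply: funext => t; rewrite /frac_types_le /cnt mul0r addr0 mulrC.
by rewrite yule_lin mul0r addr0 mulrC.
Qed.

End Rec.

Section Ana.
Variables (R : realType).

Lemma ln_le_sub1 (x : R) : 0 < x -> ln x <= x - 1.
Proof.
move=> x0; have := expR_ge1Dx (ln x); rewrite lnK ?posrE //; lra.
Qed.

Lemma lnS_le (n : R) : 0 < n -> ln (n + 1) - ln n <= n^-1.
Proof.
move=> n0; rewrite -ln_div ?posrE; last 2 first.
- lra.
- by [].
have := ln_le_sub1 ((n + 1) / n); rewrite divr_gt0 //; last lra.
move=> /(_ isT) h; apply: (le_trans h); rewrite mulrDl divff ?gt_eqF //; lra.
Qed.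

Lemma lnS_ge (n : R) : 0 < n -> (n + 1)^-1 <= ln (n + 1) - ln n.
Proof.
move=> n0; have n10 : 0 < n + 1 by lra.
have := ln_le_sub1 (n / (n + 1)); rewrite divr_gt0 // ln_div ?posrE //.
move=> /(_ isT) h.
have e : n / (n + 1) - 1 = - (n + 1)^-1.
  by field; rewrite gt_eqF.
lra.
Qed.


Lemma step_up (r n : R) : 0 < r < 1 -> 0 < n ->
  1 - r / (n + 1) <= expR (r * (ln n - ln (n + 1)) + r / n - r / (n + 1)).
Proof.
move=> /andP[r0 r1] n0.
apply: le_trans (expR_ge1Dx (- (r / (n + 1)))) _.
rewrite ler_expR.
have h := lnS_le n n0.
have h2 : r * (ln (n + 1) - ln n) <= r * n^-1 by rewrite ler_wpM2l // ltW.
rewrite /(_ / _) in h2 *; lra.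
Qed.

Lemma step_lo (r n : R) : 0 < r < 1 -> 0 < n ->
  expR (r * (ln n - ln (n + 1)) - r ^+ 2 / n + r ^+ 2 / (n + 1)) <= 1 - r / (n + 1).
Proof.
move=> /andP[r0 r1] n0.
have n10 : 0 < n + 1 by lra.
have nr0 : 0 < n + 1 - r by lra.
have a0 : 0 < 1 - r / (n + 1).
  rewrite subr_gt0 ltr_pdivrMr //; lra.
rewrite -[X in _ <= X]lnK ?posrE // ler_expR.
have a0' : 0 < (1 - r / (n + 1))^-1 by rewrite invr_gt0.
have h1 := ln_le_sub1 _ a0'.
rewrite lnV ?posrE // in h1.
have e1 : (1 - r / (n + 1))^-1 - 1 =
   r / (n + 1) + r ^+ 2 / (n * (n + 1)) - r * (r - r ^+ 2) / (n * (n + 1) * (n + 1 - r)).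
  field. by rewrite !gt_eqF.
have e2 : - r ^+ 2 / n + r ^+ 2 / (n + 1) = - (r ^+ 2 / (n * (n + 1))).
  field. by rewrite !gt_eqF.
have p1 : 0 <= r * (r - r ^+ 2) / (n * (n + 1) * (n + 1 - r)).
  apply: divr_ge0; last by rewrite !mulr_ge0 // ltW.
  apply: mulr_ge0; first exact: ltW.
  rewrite subr_ge0 expr2 ler_piMr // ltW //.
have h := lnS_ge n n0.
have h2 : r * (n + 1)^-1 <= r * (ln (n + 1) - ln n) by rewrite ler_wpM2l // ltW.
have e3 : r * (ln n - ln (n + 1)) - r ^+ 2 / n + r ^+ 2 / (n + 1)
   = - (r * (ln (n + 1) - ln n)) - (r ^+ 2 / (n * (n + 1))).
  by rewrite -addrA -mulNr e2; ring.
rewrite e3.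
move: h1 h2 p1; rewrite e1 /(_ / _); lra.
Qed.

End Ana.

Lemma inv_bounds (R : realType) (r : R) (k : nat) : 0 < r < 1 -> (1 <= k)%N ->
  forall d, let N := (k + d)%N in
  Q R r k N <= expR (r * (ln k%:R - ln N%:R) + r / k%:R - r / N%:R) /\
  expR (r * (ln k%:R - ln N%:R) - r ^+ 2 / k%:R + r ^+ 2 / N%:R) <= Q R r k N.
Proof.
move=> hr k1; elim => [|d [IHu IHl]] N; rewrite /N.
  rewrite addn0 Q_k //; split; rewrite -[1]expR0 ler_expR; lra.
rewrite addnS Q_step ?leq_addr //; last by rewrite (leq_trans k1) ?leq_addr.
set n := (k + d)%N in IHu IHl *.
have n0 : (0 < n%:R :> R) by rewrite ltr0n (leq_trans k1) ?leq_addr.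
have Q0 : 0 <= Q R r k n by apply: le_trans IHl; exact: expR_ge0.
have a0 : 0 <= 1 - r / (n.+1)%:R.
  have := @step_lo R r _ hr n0; rewrite natr1 => h; apply: le_trans h; exact: expR_ge0.
split.
  apply: le_trans (ler_pM Q0 a0 IHu (_ : _ <= expR (r * (ln n%:R - ln (n%:R + 1)) + r / n%:R - r / (n%:R + 1)))) _.
    by rewrite -natr1; exact: step_up.
  rewrite -expRD -natr1; rewrite ler_expR; lra.
apply: le_trans (ler_pM (expR_ge0 _) (expR_ge0 _) IHl (_ : expR (r * (ln n%:R - ln (n%:R + 1)) - r ^+ 2 / n%:R + r ^+ 2 / (n%:R + 1)) <= _)).
  rewrite -expRD -natr1; rewrite ler_expR; lra.
by rewrite -natr1; exact: step_lo.
Qed.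

Theorem lemma3p2 (R : realType) (r : R) (N k : nat) :
  0 < r < 1 -> (1 <= N)%N -> (1 <= k <= N)%N ->
  (k%:R / N%:R) `^ r * expR (- (r ^+ 2) / k%:R) <= EX r k N /\
  EX r k N <= (k%:R / N%:R) `^ r * expR (r / k%:R).
Proof.
move=> hr N1 /andP[k1 kN].
have := @inv_bounds R r k hr k1 (N - k); rewrite /= subnKC // EX_Q => -[hu hl].
have k0 : (0 < k%:R :> R) by rewrite ltr0n.
have N0 : (0 < N%:R :> R) by rewrite ltr0n.
have hpow : (k%:R / N%:R) `^ r = expR (r * (ln k%:R - ln N%:R)).
  by rewrite /powR gt_eqF ?divr_gt0 // ln_div ?posrE.
rewrite hpow -!expRD.
have rN : 0 <= r / N%:R by rewrite divr_ge0 // ltW //; case/andP: hr.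
have rN2 : 0 <= r ^+ 2 / N%:R by rewrite divr_ge0 // ?sqr_ge0 // ltW.
split.
  apply: le_trans hl; rewrite ler_expR.
  rewrite /(_ / _) in rN2 *; lra.
apply: le_trans hu _; rewrite ler_expR.
rewrite /(_ / _) in rN *; lra.
Qed.
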